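(* Let $\mathcal W'_r=\{W\in\mathcal W_r: W=\widehat W\}$ be the collection of primary wiretap sets. Then $\min_{W\in\mathcal W_r}\Omega(W)=\min_{W\in\mathcal W'_r}\Omega(W)$.
   Context: $\mathcal G=(\mathcal V,\mathcal E)$ is a finite directed acyclic graph (multiple edges allowed); $S$ is the set of source nodes (exactly the nodes without input edges), $\rho\notin S$ the sink (no output edges), and every node other than $\rho$ has a directed path to $\rho$. For a node $\sigma$ and edge $e$, $\sigma\to e$ means there is a directed path from $\sigma$ whose last edge is $e$. For $C\subseteq\mathcal E$: $D_C=\{\sigma\in S:\exists e\in C,\ \sigma\to e\}$, $I_C=\{\sigma\in S:$ no path from $\sigma$ to $\rho$ after deleting $C\}$; $\Lambda(\mathcal N)=\{C\subseteq\mathcal E:I_C\neq\emptyset\}$. $\mathcal W_r=\{W\subseteq\mathcal E:|W|\le r\}$ for a nonnegative integer $r$. For $W\subseteq\mathcal E$, $\Omega(W)=\min\{|C|-|W|: C\in\Lambda(\mathcal N),\ W\subseteq C,\ D_W\subseteq I_C\}$. Cuts separating edge sets: for a node set $U$ and edge set $W$, subdivide each $e\in W$ by a new node $v_e$ splitting $e$ into $e^1$ (from $\mathrm{tail}(e)$ to $v_e$) and $e^2$ (from $v_e$ to $\mathrm{head}(e)$); a cut separating $W$ from $U$ is an edge set obtained from an edge set of the subdivided graph whose deletion leaves no path from $U$ to any $v_e$, after replacing each $e^1$ or $e^2$ by $e$. A minimum cut is one of minimum size. A minimum cut separating $W$ from $U$ is primary if it separates from $U$ every minimum cut separating $W$ from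 $U$; it exists and is unique. $\widehat W$ denotes the primary minimum cut separating $W$ from $D_W$; $W$ is called primary if $W=\widehat W$. *)

(* Defs.v *)
From mathcomp Require Import all_boot.
Set Implicit Arguments. Unset Strict Implicit. Unset Printing Implicit Defensive.

Record net := Net {
  nV : finType;
  nE : finType;
  tl : nE -> nV;
  hd : nE -> nV;
  sink : nV }.

Definition reach (Nd X : finType) (tlx hdx : X -> Nd) (ok : pred X) : rel Nd :=
  connect (fun a b => [exists x, [&& ok x, tlx x == a & hdx x == b]]).

Section Net.
Variable N : net.
Local Notation V := (nV N).
Local Notation E := (nE N).

Definition sources : {set V} := [set v | [forall e, @hd N e != v]].

Definition wf_net : Prop :=
  [/\ (* acyclic: no directed path of length >= 1 from a node to itself *)
      (forall e : E, ~~ reach (@tl N) (@hd N) predT (@hd N e) (@tl N e)),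
      sink N \notin sources,
      (forall e : E, @tl N e != sink N) &
      (forall v : V, v != sink N -> reach (@tl N) (@hd N) predT v (sink N))].

(* sigma -> e : a directed path from sigma whose last edge is e *)
Definition to_edge (s : V) (e : E) : bool := reach (@tl N) (@hd N) predT s (@tl N e).

Definition Dset (C : {set E}) : {set V} :=
  [set s in sources | [exists e in C, to_edge s e]].

Definition Iset (C : {set E}) : {set V} :=
  [set s in sources | ~~ reach (@tl N) (@hd N) (fun e => e \notin C) s (sink N)].

Definition in_Lambda (C : {set E}) : bool := Iset C != set0.

(* Omega(W) = min { |C| - |W| : C in Lambda, W \subset C, D_W \subset I_C }.
   (The feasible family is nonempty under wf_net, C = setT, and every value
   is <= #|E|, so the default #|E| of the big min is harmless.) *)
Definition Omega (W : {set E}) : nat :=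
  \big[minn/#|E|]_(C : {set E} | [&& in_Lambda C, W \subset C & Dset W \subset Iset C])
     (#|C| - #|W|).

(* The graph subdivided at the edges of W: nodes V + E (inr e is v_e, only used
   for e in W), edges E * bool: (e,false) is e itself when e \notin W and e^1
   when e \in W; (e,true) is e^2 (only a genuine edge when e \in W). *)
Definition sd_ok (W : {set E}) (x : E * bool) : bool := x.2 ==> (x.1 \in W).
Definition sd_tl (W : {set E}) (x : E * bool) : V + E :=
  if x.2 then inr x.1 else inl (@tl N x.1).
Definition sd_hd (W : {set E}) (x : E * bool) : V + E :=
  if x.2 then inl (@hd N x.1)
  else if x.1 \in W then inr x.1 else inl (@hd N x.1).

Definition is_cut (W : {set E}) (U : {set V}) (C : {set E}) : bool :=
  [exists K : {set E * bool},
    [&& K \subset [set x | sd_ok W x],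
        [forall u in U, forall e in W,
           ~~ reach (sd_tl W) (sd_hd W) (fun x => sd_ok W x && (x \notin K))
                    (inl u) (inr e)]
      & C == [set x.1 | x in K]]].

Definition is_min_cut (W : {set E}) (U : {set V}) (C : {set E}) : bool :=
  is_cut W U C && [forall C' : {set E}, is_cut W U C' ==> (#|C| <= #|C'|)].

Definition is_primary_min_cut (W : {set E}) (U : {set V}) (C : {set E}) : bool :=
  is_min_cut W U C &&
  [forall C' : {set E}, is_min_cut W U C' ==> is_cut C' U C].

(* W is primary: W = \hat W, i.e. W is the (unique) primary minimum cut
   separating W from D_W *)
Definition primary (W : {set E}) : bool := is_primary_min_cut W (Dset W) W.

End Net.

(* Main.v *)
Require Import Defs.
From mathcomp Require Import all_boot.
From mathcomp Require Import zify.
Set Implicit Arguments. Unset Strict Implicit. Unset Printing Implicit Defensive.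

Section Reach.
Variables (Nd X : finType) (tlx hdx : X -> Nd).
Implicit Types (ok : pred X).

Lemma reach_ind ok (P : Nd -> Prop) a b :
  P a -> (forall x, ok x -> P (tlx x) -> P (hdx x)) -> reach tlx hdx ok a b -> P b.
Proof.
move=> Pa step /connectP [p]; elim: p a Pa => [|c p IH] a Pa /=; first by move=> _ ->.
case/andP=> /existsP [x /and3P [okx /eqP tx /eqP hx]] pth lst.
apply: IH pth lst; rewrite -hx; apply: step okx _; by rewrite tx.
Qed.

Lemma reach_refl ok a : reach tlx hdx ok a a.
Proof. exact: connect0. Qed.

Lemma reach_trans ok a b c :
  reach tlx hdx ok a b -> reach tlx hdx ok b c -> reach tlx hdx ok a c.
Proof. exact: connect_trans. Qed.

Lemma reach_edge ok x : ok x -> reach tlx hdx ok (tlx x) (hdx x).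
Proof. move=> okx; apply: connect1; apply/existsP; exists x; by rewrite okx !eqxx. Qed.

Lemma reach_step ok a x : ok x -> reach tlx hdx ok a (tlx x) -> reach tlx hdx ok a (hdx x).
Proof. move=> okx r; exact: reach_trans r (reach_edge okx). Qed.

Lemma reach_mono ok ok' a b : (forall x, ok x -> ok' x) ->
  reach tlx hdx ok a b -> reach tlx hdx ok' a b.
Proof.
move=> sub; apply: (@reach_ind ok (reach tlx hdx ok' a)); first exact: reach_refl.
move=> x /sub okx; exact: reach_step.
Qed.

Lemma reach_hit ok ok' (C : pred X) a b : (forall x, ok x -> ~~ C x -> ok' x) ->
  reach tlx hdx ok a b -> ~~ reach tlx hdx ok' a b ->
  exists x, [/\ ok x, C x & reach tlx hdx ok a (tlx x)].
Proof.
move=> hok r nr0.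
have nr : ~~ reach tlx hdx (fun x => ok x && ~~ C x) a b.
  by apply: contra nr0; apply: reach_mono => y /andP[]; exact: hok.
have : reach tlx hdx (fun x => ok x && ~~ C x) a b \/
       exists x, [/\ ok x, C x & reach tlx hdx ok a (tlx x)].
  apply: (@reach_ind ok (fun v => reach tlx hdx (fun x => ok x && ~~ C x) a v \/
            exists x, [/\ ok x, C x & reach tlx hdx ok a (tlx x)]) a b) r.
    by left; exact: reach_refl.
  move=> x okx [r1|[y hy]]; last by right; exists y.
  case Cx: (C x).
    right; exists x; split=> //; apply: reach_mono r1 => y /andP[] //.
  left; apply: reach_step r1; by rewrite okx Cx.
by case=> // r1; rewrite r1 in nr.
Qed.

Lemma reach_lift (Nd2 X2 : finType) (tl2 hd2 : X2 -> Nd2) (ok2 : pred X2) ok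
  (f : Nd -> Nd2) a b :
  (forall x, ok x -> reach tl2 hd2 ok2 (f (tlx x)) (f (hdx x))) ->
  reach tlx hdx ok a b -> reach tl2 hd2 ok2 (f a) (f b).
Proof.
move=> h; apply: (@reach_ind ok (fun v => reach tl2 hd2 ok2 (f a) (f v))).
  exact: connect0.
move=> x okx r; exact: connect_trans r (h x okx).
Qed.

End Reach.

Lemma bigmin_le (I : finType) (P : pred I) (F : I -> nat) d i :
  P i -> \big[minn/d]_(j | P j) F j <= F i.
Proof.
move=> Pi; rewrite -big_filter.
have : i \in [seq j <- index_enum I | P j] by rewrite mem_filter Pi mem_index_enum.
elim: (filter _ _) => //= j s IH; rewrite in_cons big_cons /=.
case/orP=> [/eqP<-|/IH h]; first exact: geq_minl.
exact: leq_trans (geq_minr _ _) h.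
Qed.

Lemma bigmin_le_d (I : finType) (P : pred I) (F : I -> nat) d :
  \big[minn/d]_(j | P j) F j <= d.
Proof.
rewrite -big_filter; elim: (filter _ _) => [|j s IH]; rewrite ?big_nil ?big_cons //=.
by rewrite geq_min IH orbT.
Qed.

Lemma bigmin_geq (I : finType) (P : pred I) (F : I -> nat) d x :
  x <= d -> (forall i, P i -> x <= F i) -> x <= \big[minn/d]_(j | P j) F j.
Proof.
move=> hd hF; apply: (big_ind (fun m => x <= m)) => // a b ha hb; by rewrite leq_min ha hb.
Qed.

Lemma cardB (T : finType) (A : {set T}) : #|A| = \sum_(x : T) (x \in A).
Proof. by rewrite -sum1_card big_mkcond /=; apply: eq_bigr => x _; case: (x \in A). Qed.

Section Main.
Variable N : net.
Local Notation V := (nV N).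
Local Notation E := (nE N).
Local Notation R := (reach (@tl N) (@hd N)).
Implicit Types (W C X Y : {set E}) (U S T : {set V}).

Definition blocks (W : {set E}) (U : {set V}) (C : {set E}) : bool :=
  [forall u in U, forall e in W, (e \in C) || ~~ R (fun x => x \notin C) u (tl e)].

Lemma blocksP W U C : reflect (forall u e, u \in U -> e \in W -> e \notin C ->
   ~~ R (fun x => x \notin C) u (tl e)) (blocks W U C).
Proof.
apply: (iffP forallP) => [H u e uU eW eC | H u].
  move: (H u); rewrite uU /= => /forallP /(_ e); by rewrite eW (negbTE eC).
apply/implyP => uU; apply/forallP => e; apply/implyP => eW.
case: (boolP (e \in C)) => //= eC; exact: H.
Qed.

Lemma blocksD W U C : blocks W U C -> forall u e, u \in U -> e \in W ->
  e \notin C -> ~~ R (fun x => x \notin C) u (tl e).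
Proof. by move/blocksP. Qed.

Lemma cutE W U C : is_cut W U C = blocks W U C.
Proof.
apply/idP/idP.
  case/existsP => K /and3P [sK nr /eqP CE]; apply/blocksP => u e uU eW eC.
  apply/negP => r.
  have notK : forall x : E * bool, x.1 \notin C -> x \notin K.
    move=> x; apply: contra => xK; rewrite CE; exact: imset_f.
  have sde : forall x : E * bool, sd_ok W x -> x.1 \notin C ->
      reach (sd_tl W) (sd_hd W) (fun x => sd_ok W x && (x \notin K))
            (sd_tl W x) (sd_hd W x).
    move=> x ox xC; apply: reach_edge; by rewrite ox notK.
  have : reach (sd_tl W) (sd_hd W) (fun x => sd_ok W x && (x \notin K))
           (inl u) (inr e).
    apply: (@reach_trans _ _ _ _ _ _ (inl (tl e))); last first.
      by have := sde (e, false); rewrite /sd_tl /sd_hd /= eW; apply.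
    apply: (reach_lift (f := inl) _ r) => x xC.
    case xW: (x \in W).
      apply: (@reach_trans _ _ _ _ _ _ (inr x)).
        by have := sde (x, false); rewrite /sd_tl /sd_hd /= xW; apply.
      by have := sde (x, true); rewrite /sd_tl /sd_hd /sd_ok /= xW; apply.
    by have := sde (x, false); rewrite /sd_tl /sd_hd /= xW; apply.
  move: nr => /forallP /(_ u); rewrite uU /= => /forallP /(_ e); rewrite eW /=.
  by move/negP.
move/blocksP => H; apply/existsP; exists [set x | sd_ok W x && (x.1 \in C)].
apply/and3P; split.
- by apply/subsetP => x; rewrite !inE => /andP[].
- apply/forallP => u; apply/implyP => uU; apply/forallP => e; apply/implyP => eW.
  apply/negP => r.
  pose P (y : V + E) : Prop := match y with
           | inl v => R (fun x => x \notin C) u v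
           | inr e' => (e' \notin C) && R (fun x => x \notin C) u (tl e') end.
  have : P (inr e).
    apply: (reach_ind (P := P) _ _ r); first exact: reach_refl.
    move=> [x1 b] /andP [ox nK].
    have x1C : x1 \notin C by move: nK; rewrite inE ox.
    case: b ox nK => ox nK /=.
      by rewrite /P /=; case/andP => _ rr; apply: (reach_step _ rr).
    rewrite /P /sd_hd /= => rr; case: (x1 \in W) => /=; last exact: (reach_step _ rr).
    by rewrite x1C.
  by case/andP => eC rr; have := H u e uU eW eC; rewrite rr.
- apply/eqP/setP => e; apply/idP/imsetP.
    by move=> eC; exists (e, false) => //; rewrite inE /sd_ok /= eC.
  by case=> x; rewrite inE => /andP [_ xC] ->.
Qed.

Definition cutS W S : {set E} :=
  [set e | (tl e \in S) && ((hd e \notin S) || (e \in W))].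
Definition SX U X : {set V} :=
  [set v | [exists u in U, R (fun x => x \notin X) u v]].

Lemma stay W S a b : a \in S -> R (fun x => x \notin cutS W S) a b -> b \in S.
Proof.
move=> aS; apply: (reach_ind (P := fun v => v \in S)) => // x xn tS.
by move: xn; rewrite inE tS /= negb_or negbK => /andP[].
Qed.

Lemma blocks_cutS W U S : U \subset S -> blocks W U (cutS W S).
Proof.
move=> US; apply/blocksP => u e uU eW eC; apply/negP => r.
have := stay (subsetP US u uU) r.
by move: eC; rewrite inE eW orbT andbT => /negbTE ->.
Qed.

Lemma cutS_sub W U X : blocks W U X -> cutS W (SX U X) \subset X.
Proof.
move=> bX; apply/subsetP => e; rewrite !inE => /andP [/existsP [u /andP [uU r]] H].
case: (boolP (e \in X)) => // eX; exfalso.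
case/orP: H.
  move/negP; apply; apply/existsP; exists u; rewrite uU /=; exact: (reach_step _ r).
by move=> eW; move/blocksP: bX => /(_ u e uU eW eX); rewrite r.
Qed.

Lemma U_SX U X : U \subset SX U X.
Proof.
apply/subsetP => u uU; rewrite inE; apply/existsP; exists u; rewrite uU; exact: connect0.
Qed.

Lemma submod W S T :
  #|cutS W (S :&: T)| + #|cutS W (S :|: T)| <= #|cutS W S| + #|cutS W T|.
Proof.
rewrite !cardB -!big_split /=; apply: leq_sum => e _; rewrite !inE.
by case: (tl e \in S); case: (tl e \in T); case: (hd e \in S); case: (hd e \in T);
   case: (e \in W).
Qed.

Lemma exists_primary W U : exists X, is_primary_min_cut W U X.
Proof.
pose M := #|V|.+1.
pose g S := #|cutS W S| * M + #|S|.
have [S0 US0 minS0] : exists2 S0 : {set V}, U \subset S0 & forall S, U \subset S -> g S0 <= g S.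
  case: (@arg_minnP _ setT (fun S => U \subset S) g (subsetT U)) => S0 US0 H.
  by exists S0.
have key1 : forall S, U \subset S -> #|cutS W S0| <= #|cutS W S|.
  move=> S US; have := minS0 S US; rewrite /g => h.
  rewrite leqNgt; apply/negP => lt.
  have h1 : #|cutS W S|.+1 * M <= #|cutS W S0| * M := leq_mul lt (leqnn M).
  have h2 : #|S| < M by rewrite ltnS max_card.
  move: h1; rewrite mulSn => h1; lia.
have key2 : forall S, U \subset S -> #|cutS W S| = #|cutS W S0| -> S0 \subset S.
  move=> S US eq.
  have US0S : U \subset S0 :&: S by rewrite subsetI US0 US.
  have h1 := key1 _ US0S.
  have h2 := key1 (S0 :|: S) (subset_trans US0 (subsetUl _ _)).
  have h3 := submod W S0 S.
  have ceq : #|cutS W (S0 :&: S)| = #|cutS W S0| by lia.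
  have := minS0 _ US0S; rewrite /g ceq leq_add2l => hc.
  have : S0 :&: S == S0 by rewrite eqEcard subsetIl hc.
  by move/eqP/setIidPl.
pose X0 := cutS W S0.
exists X0.
have bX0 : blocks W U X0 := blocks_cutS W US0.
have minX0 : forall X, blocks W U X -> #|X0| <= #|X|.
  move=> X bX; exact: leq_trans (key1 _ (U_SX U X)) (subset_leq_card (cutS_sub bX)).
have mincut_eq : forall X, blocks W U X -> #|X| <= #|X0| -> X = cutS W (SX U X).
  move=> X bX le; apply/esym/eqP; rewrite eqEcard cutS_sub //=.
  exact: leq_trans le (key1 _ (U_SX _ _)).
rewrite /is_primary_min_cut /is_min_cut cutE bX0 /=.
apply/andP; split.
  apply/forallP => C'; apply/implyP; rewrite cutE => bC; exact: minX0.
apply/forallP => C'; apply/implyP => /andP [bC' /forallP mC']; rewrite cutE in bC'.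
have le : #|C'| <= #|X0| by have := mC' X0; rewrite cutE bX0.
have CE := mincut_eq C' bC' le.
have eqc : #|cutS W (SX U C')| = #|cutS W S0|.
  by rewrite -CE; apply/eqP; rewrite eqn_leq le minX0.
have sub := key2 _ (U_SX U C') eqc.
rewrite cutE; apply/blocksP => u e uU eC' eX0; apply/negP => r.
have tS : tl e \in S0 := stay (subsetP US0 u uU) r.
have [hS eW] : hd e \in S0 /\ e \notin W.
  by move: eX0; rewrite /X0 inE tS /= negb_or negbK => /andP[].
move: eC'; rewrite {1}CE inE => /andP [_].
by rewrite (negbTE eW) orbF (subsetP sub _ hS).
Qed.

Lemma mincut_D W U X : is_min_cut W U X -> Dset X \subset Dset W.
Proof.
case/andP => bX /forallP mX; rewrite cutE in bX.
have le : forall Y, blocks W U Y -> #|X| <= #|Y|.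
  by move=> Y bY; have := mX Y; rewrite cutE bY.
pose S := SX U X.
have XE : X = cutS W S.
  apply/esym/eqP; rewrite eqEcard cutS_sub //=.
  by apply: le; apply: blocks_cutS; exact: U_SX.
pose Co : {set V} := [set v | [exists w in W, R predT v (tl w)]].
have key : forall e, e \in X -> (e \in W) || (hd e \in Co).
  move=> e eX; case: (boolP (e \in W)) => //= eW; apply/negPn/negP => hC.
  have sub : cutS W (S :|: ~: Co) \subset X :\ e.
    apply/subsetP => x; rewrite in_set !in_setU !in_setC => /andP [tx H].
    have A : (x \in W) ==> (tl x \in Co).
      apply/implyP => xW; rewrite inE; apply/existsP; exists x; rewrite xW; exact: connect0.
    have B : (hd x \in Co) ==> (tl x \in Co).
      apply/implyP; rewrite !inE => /existsP [w /andP [wW r]]; apply/existsP; exists w.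
      rewrite wW /=; exact: reach_trans (@reach_edge _ _ _ _ predT x isT) r.
    rewrite in_setD1 XE in_set.
    case: (eqVneq x e) => [xe|ne] /=.
      move: H; rewrite xe (negbTE eW) orbF negb_or negbK => /andP [_ hh].
      by rewrite hh in hC.
    move: A B tx H.
    by case: (x \in W); case: (tl x \in S); case: (tl x \in Co); case: (hd x \in S);
       case: (hd x \in Co).
  have bS' : blocks W U (cutS W (S :|: ~: Co)).
    apply: blocks_cutS; exact: subset_trans (U_SX U X) (subsetUl _ _).
  have := leq_trans (le _ bS') (subset_leq_card sub).
  by rewrite [#|X|](cardsD1 e) eX add1n ltnn.
apply/subsetP => s; rewrite !inE => /andP [sS /existsP [e /andP [eX te]]].
rewrite sS /=; case/orP: (key e eX) => [eW|].
  by apply/existsP; exists e; rewrite eW.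
rewrite inE => /existsP [w /andP [wW r]]; apply/existsP; exists w; rewrite wW /=.
exact: reach_trans (reach_step _ te) r.
Qed.

Lemma omega_le W X : is_min_cut W (Dset W) X -> Omega X <= Omega W.
Proof.
move=> mc; have DX := mincut_D mc.
move: (mc) => /andP [bX _]; rewrite cutE in bX.
apply: bigmin_geq; first exact: bigmin_le_d.
move=> Cf /and3P [lam WC DI].
pose C' := (Cf :\: W) :|: X.
have XC' : X \subset C' by rewrite subsetUr.
have ICsub : Iset Cf \subset Iset C'.
  apply/subsetP => s; rewrite !inE => /andP [sS nr]; rewrite sS /=; apply/negP => r.
  have [x [xC' xCf rx]] := reach_hit (C := fun x => x \in Cf)
        (fun x _ (h : ~~ (x \in Cf)) => h) r nr.
  have [xW xX] : x \in W /\ x \notin X.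
    by move: xC'; rewrite !inE xCf andbT negb_or negbK => /andP[].
  have sD : s \in Dset W.
    rewrite !inE sS /=; apply/existsP; exists x; rewrite xW /=.
    by apply: reach_mono rx.
  have := (blocksD bX) s x sD xW xX.
  suff -> : R (fun y => y \notin X) s (tl x) by [].
  apply: reach_mono rx => y; apply: contra; exact: (subsetP XC').
have feas : [&& in_Lambda C', X \subset C' & Dset X \subset Iset C'].
  rewrite XC' /= (subset_trans DX (subset_trans DI ICsub)) andbT.
  have [s sI] : exists s, s \in Iset Cf by apply/set0Pn.
  by apply/set0Pn; exists s; exact: (subsetP ICsub).
have hO : Omega X <= #|C'| - #|X| by rewrite /Omega; apply: bigmin_le.
apply: leq_trans hO _.
have h1 : #|C'| <= #|Cf :\: W| + #|X| by rewrite cardsU leq_subr.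
have h2 : #|Cf :\: W| = #|Cf| - #|W| by rewrite cardsD (setIidPr WC).
lia.
Qed.

Lemma hat_primary W X : is_primary_min_cut W (Dset W) X -> primary X.
Proof.
case/andP => mc /forallP pr. have DX := mincut_D mc.
move: (mc) => /andP [bX /forallP mX]; rewrite cutE in bX.
have le : forall Y, blocks W (Dset W) Y -> #|X| <= #|Y|.
  by move=> Y bY; have := mX Y; rewrite cutE bY.
have trans : forall Y, blocks X (Dset X) Y -> blocks W (Dset W) Y.
  move=> Y bY; apply/blocksP => u w uD wW wY; apply/negP => r.
  have sU : u \in sources N by move: uD; rewrite inE => /andP[].
  case: (boolP (w \in X)) => wX.
    have uDX : u \in Dset X.
      rewrite inE sU /=; apply/existsP; exists w; rewrite wX /=.
      by apply: reach_mono r.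
    by have := (blocksD bY) u w uDX wX wY; rewrite r.
  have nr := (blocksD bX) u w uD wW wX.
  have [x [xY xX rx]] := reach_hit (C := fun x => x \in X)
        (fun x _ (h : ~~ (x \in X)) => h) r nr.
  have uDX : u \in Dset X.
    rewrite inE sU /=; apply/existsP; exists x; rewrite xX /=.
    by apply: reach_mono rx.
  by have := (blocksD bY) u x uDX xX xY; rewrite rx.
have bXX : blocks X (Dset X) X by apply/blocksP => u e _ eX; rewrite eX.
rewrite /primary /is_primary_min_cut /is_min_cut cutE bXX /=.
apply/andP; split.
  apply/forallP => C''; apply/implyP; rewrite cutE => b; exact: le _ (trans _ b).
apply/forallP => C'; apply/implyP => /andP [bC' /forallP mC']; rewrite cutE in bC'.
have leC : #|C'| <= #|X| by have := mC' X; rewrite cutE bXX.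
have mcC : is_min_cut W (Dset W) C'.
  rewrite /is_min_cut cutE (trans _ bC') /=; apply/forallP => Y; apply/implyP.
  rewrite cutE => bY; exact: leq_trans leC (le _ bY).
have := pr C'; rewrite mcC /= !cutE => b.
apply/blocksP => u e uD eC eX; exact: (blocksD b) u e (subsetP DX u uD) eC eX.
Qed.

End Main.

Theorem lemma8 (N : net) (r : nat) :
  wf_net N ->
  \big[minn/#|nE N|]_(W : {set nE N} | #|W| <= r) Omega W =
  \big[minn/#|nE N|]_(W : {set nE N} | (#|W| <= r) && primary W) Omega W.
Proof.
move=> _; apply/eqP; rewrite eqn_leq; apply/andP; split.
  apply: bigmin_geq; first exact: bigmin_le_d.
  by move=> W /andP [Wr _]; exact: bigmin_le.
apply: bigmin_geq; first exact: bigmin_le_d.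
move=> W Wr.
have [X pX] := exists_primary W (Dset W).
have mc : is_min_cut W (Dset W) X by case/andP: pX.
have XW : #|X| <= #|W|.
  move: (mc) => /andP [_ /forallP /(_ W)]; rewrite cutE.
  have -> : blocks W (Dset W) W by apply/blocksP => u e _ eW; rewrite eW.
  by [].
have feas : (#|X| <= r) && primary X.
  by rewrite (leq_trans XW Wr) (hat_primary pX).
apply: leq_trans (omega_le mc); exact: bigmin_le.
Qed.
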